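(* Let $n,k$ be positive integers with $n>2k$, and let $\sigma\in S_n$ be a permutation all of whose cycles have length exceeding $k$. Then the subgroups $S_{n-k}$ and $\langle\sigma\rangle$ invariably generate $S_n$.
   Context: $S_{n-k}$ is viewed as the subgroup of $S_n$ of permutations of $\{1,\dots,n-k\}$ fixing each element of $\{n-k+1,\dots,n\}$. Subgroups $\{H_i\}_{i\in I}$ of a group $H$ invariably generate $H$ if for every choice of elements $\{\sigma_i\}_{i\in I}$ of $H$, the conjugates $\{\sigma_i^{-1}H_i\sigma_i\}_{i\in I}$ generate $H$. *)

(* Defs.v *)
From mathcomp Require Import all_boot all_fingroup.
Set Implicit Arguments. Unset Strict Implicit. Unset Printing Implicit Defensive.
Local Open Scope group_scope.

(* S_m viewed inside S_n: permutations of 'I_n fixing every i with m <= i,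
   i.e. permutations of {0,...,m-1} (the paper's {1,...,m}). *)
Definition Sym_sub (n m : nat) : {set 'S_n} :=
  [set s : 'S_n | [forall i : 'I_n, (m <= i)%N ==> (s i == i)]].

Definition invariably_generate2 (gT : finGroupType) (H1 H2 G : {set gT}) :=
  forall x y : gT, x \in G -> y \in G -> << (H1 :^ x) :|: (H2 :^ y) >> = G.

(* every cycle (orbit of <[s]>, fixed points being cycles of length 1)
   of the permutation s has length exceeding k *)
Definition all_cycles_longer (n k : nat) (s : 'S_n) :=
  forall x : 'I_n, (k < #|porbit s x|)%N.

(* Main.v *)
Require Import Defs.
From mathcomp Require Import all_boot all_fingroup.
From mathcomp Require Import zify.
Set Implicit Arguments. Unset Strict Implicit.
Local Open Scope group_scope.

Lemma tp_trans (n : nat) (G : {group 'S_n}) (a b c : 'I_n) :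
  tperm a b \in G -> tperm b c \in G -> tperm a c \in G.
Proof.
have [->|ab] := eqVneq a b; first by [].
have [->|bc] := eqVneq b c; first by [].
have [->|ac] := eqVneq a c; first by rewrite tperm1 group1.
move=> hab hbc.
rewrite -(tpermJ_tperm bc ac) [tperm b a]tpermC.
exact: groupJ.
Qed.

Lemma tp_conj (n : nat) (G : {group 'S_n}) (a b : 'I_n) (g : 'S_n) :
  tperm a b \in G -> g \in G -> tperm (g a) (g b) \in G.
Proof. by move=> h hg; rewrite -tpermJ groupJ. Qed.

Lemma card_pre (n : nat) (f : 'S_n) (S : {set 'I_n}) :
  #|[set a | f a \in S]| = #|S|.
Proof. exact: (card_preimset S (@perm_inj _ f)). Qed.

Theorem proposition3p5 (n k : nat) (s : 'S_n) :
  (0 < n)%N -> (0 < k)%N -> (2 * k < n)%N ->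
  all_cycles_longer k s ->
  invariably_generate2 (Sym_sub n (n - k)) <[s]> [set: 'S_n].
Proof.
move=> n0 k0 nk hs x y _ _.
set G := <<_>>.
pose L := [set i : 'I_n | (i < n - k)%N].
have hL : #|L| = (n - k)%N.
  have -> : L = [set widen_ord (leq_subr k n) i | i : 'I_(n - k)].
    apply/setP => i; rewrite !inE; apply/idP/imsetP.
      by move=> hi; exists (Ordinal hi) => //; apply: val_inj.
    by case=> j _ ->; rewrite /= ltn_ord.
  by rewrite card_imset ?card_ord //; by move=> i j /(congr1 val) /= ?; apply: val_inj.
pose A := [set a | (x^-1)%g a \in L].
have hA : #|A| = (n - k)%N by rewrite card_pre.
have tpA : forall a b, a \in A -> b \in A -> tperm a b \in G.
  move=> a b; rewrite !inE => ha hb.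
  have -> : tperm a b = (tperm ((x^-1)%g a) ((x^-1)%g b)) ^ x.
    by rewrite tpermJ !permKV.
  apply: mem_gen; rewrite in_setU memJ_conjg /Sym_sub inE; apply/orP; left.
  apply/forallP => i; apply/implyP => hi.
  rewrite tpermD //; apply/eqP => e.
    by move: ha; rewrite e ltnNge hi.
  by move: hb; rewrite e ltnNge hi.
have inter : forall C : {set 'I_n}, #|C| = (n - k)%N -> exists d, d \in A :&: C.
  move=> C hC; apply/set0Pn; rewrite -card_gt0.
  have := cardsUI A C; rewrite hA hC.
  have : (#|A :|: C| <= n)%N by rewrite -[X in (_ <= X)%N](card_ord n) max_card.
  move=> h1 h2; lia.
have good : forall p, exists2 d, d \in A & tperm p d \in G.
  move=> p.
  pose A' := [set i | y i \in A].
  have hA' : #|A'| = (n - k)%N by rewrite card_pre.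
  have [q hq] : exists q, q \in porbit s ((y^-1)%g p) :&: A'.
    apply/set0Pn; apply: contraT; rewrite negbK => /eqP e.
    have hsub : porbit s ((y^-1)%g p) \subset ~: A'.
      apply/subsetP => z hz; rewrite inE; apply/negP => hz'.
      have : z \in set0 by rewrite -e inE hz hz'.
      by rewrite inE.
    have := subset_leq_card hsub.
    have := cardsC A'; rewrite hA' card_ord => hc.
    have -> : #|~: A'| = k.
      lia.
    by rewrite leqNgt hs.
  move: hq; rewrite inE => /andP[/porbitP[m hm] hq].
  pose g := (s ^+ m) ^ y.
  have gG : g \in G by apply: mem_gen; rewrite in_setU memJ_conjg mem_cycle orbT.
  have gp : g p \in A.
    by rewrite /g -{1}(permKV y p) permJ -hm; move: hq; rewrite inE.
  have [d] := inter [set d | g d \in A] (etrans (card_pre g A) hA).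
  rewrite inE => /andP[dA]; rewrite inE => gdA.
  exists d => //.
  have := tp_conj (tpA _ _ gp gdA) (groupVr gG).
  by rewrite !permK.
have all_tp : forall p q, tperm p q \in G.
  move=> p q.
  have [d1 d1A h1] := good p.
  have [d2 d2A h2] := good q.
  apply: tp_trans h1 _; apply: tp_trans (tpA _ _ d1A d2A) _.
  by rewrite tpermC.
apply/eqP; rewrite eqEsubset subsetT /=.
apply/subsetP => g _.
case: (prod_tpermP g) => ts -> _.
by apply: group_prod => t _; apply: all_tp.
Qed.
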